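(* The forcing notion $\mathbb{P}$ defined below satisfies the countable chain condition.
   Context: For $n\in\omega$, $2^n$ is the set of $0$-$1$ sequences of length $n$, with metric $d(\eta,\eta')=2^{-k}$ for $\eta\ne\eta'$, where $k$ is least with $\eta\restriction k\neq\eta'\restriction k$. Let $\mathbb{L}_1(n)$ be the set of all $1$-Lipschitz functions $g\colon 2^n\to 2^n$. For a set $A$, $[A]^2$ denotes the set of $2$-element subsets of $A$, and $[A]^{<\omega}$ the finite subsets; $\rho(\alpha,\beta)$ means $\rho(\{\alpha,\beta\})$. A condition $p\in\mathbb{P}$ is a tuple $p=(n^p,s^p,v^p,\mathcal{F}^p,\gamma^p,\rho^p)$ such that: (1) $n^p\in\omega$, $s^p\in[\omega]^{<\omega}$, $v^p\in[\omega_1]^{<\omega}$; (2) $\mathcal{F}^p=\{f^p_i: i\in s^p\}\subseteq\mathbb{L}_1(n^p)$ and $\rho^p\colon[v^p]^2\to s^p$; (2') $\rho^p(\alpha,\beta)\neq\rho^p(\alpha',\beta)$ whenever $\alpha<\alpha'<\beta$; (3) $\gamma^p\colon v^p\to 2^{n^p}$ is one-to-one; (4) $\gamma^p(\alpha)=f^p_{\rho^p(\alpha,\beta)}(\gamma^p(\beta))$ whenever $\alpha<\beta$ are in $v^p$. The order: $p\le q$ ($q$ is stronger) iff (5) $n^p\le n^q$, $s^p\subseteq s^q$, $v^p\subseteq v^q$; (6) $f^q_i(\eta)\restriction n^p=f^p_i(\eta\restriction n^p)$ for each $i\in s^p$ and every $\eta\in 2^{n^q}$; (7) $\gamma^q(\alpha)\restriction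 n^p=\gamma^p(\alpha)$ for every $\alpha\in v^p$; (8) $\rho^q\restriction[v^p]^2=\rho^p$. *)

(* Defs.v *)
From HB Require Import structures.
From mathcomp Require Import all_boot all_order all_algebra.
From mathcomp Require Import boolp classical_sets cardinality.
Set Implicit Arguments. Unset Strict Implicit. Unset Printing Implicit Defensive.
Import Order.TTheory GRing.Theory Num.Theory.
Local Open Scope classical_set_scope.

(* Elements of 2^n are n-tuples of booleans; eta|k is [take k eta]. *)

(* the least k <= n with eta|k <> eta'|k (meaningful when eta <> eta') *)
Definition first_split (n : nat) (eta eta' : n.-tuple bool) : nat :=
  find (fun k => take k eta != take k eta') (iota 0 n.+1).

Definition cdist (n : nat) (eta eta' : n.-tuple bool) : rat :=
  if eta == eta' then 0%R else ((2%:R : rat) ^- (first_split eta eta'))%R.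

Definition lipschitz1 (n : nat) (g : n.-tuple bool -> n.-tuple bool) : Prop :=
  forall eta eta', (cdist (g eta) (g eta') <= cdist eta eta')%R.

(* omega_1 is represented by an abstract type W with a strict well-order lt
   which is uncountable while all its proper initial segments are countable
   (this determines (W, lt) up to isomorphism as omega_1). *)
Definition is_omega1 (W : Type) (lt : W -> W -> Prop) : Prop :=
  [/\ (forall a, ~ lt a a),
      (forall a b c, lt a b -> lt b c -> lt a c),
      (forall a b, [\/ lt a b, a = b | lt b a]) &
      well_founded lt] /\
  ((forall b, countable [set a | lt a b]) /\
      ~ countable [set: W]).

(* raw data of a condition p = (n, s, v, F, gamma, rho); rho(alpha,beta) for
   alpha < beta is stored as rho alpha beta; F = {f i : i in s}. *)
Record cond (W : Type) := Cond {
  cn : nat;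
  cs : set nat;
  cv : set W;
  cf : nat -> cn.-tuple bool -> cn.-tuple bool;
  cgamma : W -> cn.-tuple bool;
  crho : W -> W -> nat }.
Arguments cf [W] c _ _.
Arguments cgamma [W] c _.

Definition in_P (W : Type) (lt : W -> W -> Prop) (p : cond W) : Prop :=
  [/\ finite_set (cs p), finite_set (cv p) &
      (forall i, cs p i -> lipschitz1 (cf p i))] /\
  [/\
      (forall a b, cv p a -> cv p b -> lt a b -> cs p (crho p a b)),
      (forall a a' b, cv p a -> cv p a' -> cv p b -> lt a a' -> lt a' b ->
          crho p a b <> crho p a' b),
      (forall a b, cv p a -> cv p b -> cgamma p a = cgamma p b -> a = b) &
      (forall a b, cv p a -> cv p b -> lt a b ->
          cgamma p a = cf p (crho p a b) (cgamma p b))].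

(* p <= q (q is stronger): clauses (5)-(8) *)
Definition P_le (W : Type) (lt : W -> W -> Prop) (p q : cond W) : Prop :=
  [/\ cn p <= cn q, cs p `<=` cs q & cv p `<=` cv q] /\
  [/\
      (forall i, cs p i -> forall (eta : (cn q).-tuple bool)
          (eta' : (cn p).-tuple bool), val eta' = take (cn p) eta ->
          take (cn p) (cf q i eta) = val (cf p i eta')),
      (forall a, cv p a -> take (cn p) (cgamma q a) = val (cgamma p a)) &
      (forall a b, cv p a -> cv p b -> lt a b -> crho q a b = crho p a b)].

Definition P_compatible (W : Type) (lt : W -> W -> Prop) (p q : cond W) :=
  exists r, in_P lt r /\ P_le lt p r /\ P_le lt q r.

Definition P_antichain (W : Type) (lt : W -> W -> Prop) (A : set (cond W)) :=
  (forall p, A p -> in_P lt p) /\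
  (forall p q, A p -> A q -> p <> q -> ~ P_compatible lt p q).

Definition P_ccc (W : Type) (lt : W -> W -> Prop) :=
  forall A : set (cond W), P_antichain lt A -> countable A.

(* Main.v *)
Require Import Defs.
From mathcomp Require Import all_boot all_order all_algebra.
From mathcomp Require Import boolp classical_sets cardinality.
From Stdlib Require Import Lia.
From mathcomp Require Import zify.
Set Implicit Arguments. Unset Strict Implicit. Unset Printing Implicit Defensive.
Local Open Scope classical_set_scope.

Lemma countable_sub T (A B : set T) : A `<=` B -> countable B -> countable A.
Proof. by move=> AB; apply: sub_countable; apply: subset_card_le. Qed.

Lemma countableU T (A B : set T) : countable A -> countable B -> countable (A `|` B).
Proof.
move=> cA cB.
have -> : A `|` B = \bigcup_(b in [set: bool]) (if b then A else B).
  apply/seteqP; split=> x.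
    by case=> ?; [exists true|exists false].
  by case=> -[] _ ?; [left|right].
by apply: bigcup_countable => // -[].
Qed.

Lemma pigeon (I X : Type) (D : set I) (B : set X) (R : I -> X -> Prop) :
  countable D -> ~ countable B -> (forall p, B p -> exists i, D i /\ R i p) ->
  exists i, D i /\ ~ countable [set p | B p /\ R i p].
Proof.
move=> cD nB H; apply: contrapT => nE; apply: nB.
apply: (countable_sub (B := \bigcup_(i in D) [set p | B p /\ R i p])).
  by move=> p Bp; have [i [Di Rip]] := H p Bp; exists i.
apply: bigcup_countable => // i Di.
by apply: contrapT => ni; apply: nE; exists i.
Qed.

Lemma uncount_minus X (B C : set X) : ~ countable B -> countable C ->
  exists q, B q /\ ~ C q.
Proof.
move=> nB cC; apply: contrapT => nq; apply: nB.
apply: (countable_sub (B := C)) => // p Bp.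
by apply: contrapT => nCp; apply: nq; exists p.
Qed.

Lemma uncount_ne X (B : set X) : ~ countable B -> exists p, B p.
Proof. by move=> nB; have [q [Bq _]] := uncount_minus nB (countable0 X); exists q. Qed.

Lemma uncount_other X (B : set X) p : ~ countable B -> exists q, B q /\ q <> p.
Proof.
move=> nB; have [q [Bq nq]] := uncount_minus nB (countable1 p).
by exists q; split => // qp; apply: nq.
Qed.

Definition incr (W : Type) (lt : W -> W -> Prop) (e : nat -> W) k :=
  forall i j, (i < j)%N -> (j < k)%N -> lt (e i) (e j).

Section Omega.
Variables (W : Type) (lt : W -> W -> Prop).
Hypothesis om : is_omega1 lt.

Lemma om_irr a : ~ lt a a. Proof. by case: om => -[]. Qed.
Lemma om_tr a b c : lt a b -> lt b c -> lt a c. Proof. by case: om => -[_ tr _ _] _; apply: tr. Qed.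
Lemma om_tri a b : [\/ lt a b, a = b | lt b a]. Proof. by case: om => -[]. Qed.
Lemma om_wf : well_founded lt. Proof. by case: om => -[]. Qed.
Lemma om_cnt b : countable [set a | lt a b]. Proof. by case: om => _ []. Qed.
Lemma om_unc : ~ countable [set: W]. Proof. by case: om => _ []. Qed.

Lemma om_asym a b : lt a b -> ~ lt b a.
Proof. by move=> ab ba; apply: (om_irr (om_tr ab ba)). Qed.

Lemma om_above x : exists y, lt x y.
Proof.
have [y [_ ny]] := uncount_minus om_unc (countableU (om_cnt x) (countable1 x)).
exists y; case: (om_tri x y) => [//|xy|yx]; exfalso; apply: ny; rewrite /setU /=.
  by right.
by left.
Qed.

Lemma om_min (S : set W) : (exists x, S x) -> exists m, S m /\ forall x, S x -> ~ lt x m.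
Proof.
move=> [x Sx]; apply: contrapT => nm.
suff : forall y, ~ S y by move/(_ x).
apply: (well_founded_ind om_wf) => y IH Sy; apply: nm; exists y; split=> // z Sz zy.
exact: IH zy Sz.
Qed.

Lemma incr_le e k i j b : incr lt e k -> (i <= j)%N -> (j < k)%N -> lt (e j) b -> lt (e i) b.
Proof.
move=> ie; rewrite leq_eqVlt => /orP[/eqP->//|ij] jk ejb.
exact: om_tr (ie _ _ ij jk) ejb.
Qed.

Lemma delta (X : Type) k : forall (B : set X) (e : X -> nat -> W), ~ countable B ->
  (forall p, B p -> incr lt (e p) k) ->
  exists p q, [/\ B p, B q, p <> q &
   exists m, [/\ (m <= k)%N, (forall i, (i < m)%N -> e p i = e q i) &
     (forall i j, (m <= i)%N -> (i < k)%N -> (m <= j)%N -> (j < k)%N -> e p i <> e q j)]].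
Proof.
elim: k => [|k IH] B e nB ince.
  have [p Bp] := uncount_ne nB; have [q [Bq qp]] := uncount_other p nB.
  by exists p, q; split=> //; [move=> e1; apply: qp|exists 0%N; split].
have [[b nC]|allC] := pselect (exists b, ~ countable [set p | B p /\ lt (e p 0%N) b]).
  have [a [ab nCa]] : exists a, lt a b /\ ~ countable [set p | B p /\ e p 0%N = a].
    have [a [ab nCa]] := pigeon (R := fun a p => e p 0%N = a) (om_cnt b) nC
      (fun p Bp => ex_intro _ (e p 0%N) (conj Bp.2 erefl)).
    exists a; split=> //; apply: contra_not nCa; apply: countable_sub.
    by move=> p [[Bp _] ep]; split.
  have [p [q [[Bp ep] [Bq eq] pq [m [mk E1 E2]]]]] :=
    IH _ (fun p i => e p i.+1) nCa (fun p Bp i j ij jk => ince p Bp.1 i.+1 j.+1 ij jk).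
  exists p, q; split=> //; exists m.+1; split=> //.
    by case=> [|i] //= im; [rewrite ep eq|apply: E1].
  by case=> [|i] [|j] //= mi ik mj jk; apply: E2.
have [p0 Bp0] := uncount_ne nB.
have [b eb] := om_above (e p0 k).
have cC : countable [set p | B p /\ lt (e p 0%N) b].
  by apply: contrapT => nC; apply: allC; exists b.
have [q [Bq nq]] := uncount_minus nB cC.
have lb i : (i <= k)%N -> lt (e p0 i) b.
  by move=> ik; apply: (incr_le (ince _ Bp0) ik).
exists p0, q; split=> //.
  by move=> e0; apply: nq; rewrite -e0; split=> //; apply: lb.
exists 0%N; split=> // i j _ ik _ jk eij; apply: nq; split=> //.
by apply: (incr_le (ince _ Bq) (leq0n j) jk); rewrite -eij; apply: lb.
Qed.
Lemma enum_seq (w : W) n : forall (s : seq {classic W}), (size s <= n)%N ->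
  exists k e, incr lt e k /\ (forall a, a \in s <-> exists i, (i < k)%N /\ e i = a).
Proof.
elim: n => [|n IH] s.
  rewrite leqn0 => /nilP ->; exists 0%N, (fun _ => w); split=> // a.
  by split=> // -[i []].
case: s => [|x s0] hs.
  by exists 0%N, (fun _ => w); split=> // a; split=> // -[i []].
set s := x :: s0 in hs *.
have [m [ms mmin]] := om_min (ex_intro (fun a => a \in s) x (mem_head _ _)).
set s' := filter (predC1 (m : {classic W})) s.
have hs' : (size s' <= n)%N.
  have c1 : (0 < count_mem (m : {classic W}) s)%N.
    by rewrite -has_count; apply/hasP; exists m => //=.
  have := count_predC (pred1 (m : {classic W})) s.
  have -> : size s' = count (predC (pred1 (m : {classic W}))) s by apply: size_filter.
  move: c1 hs; set c := count_mem (m : {classic W}) s; set d := count _ s; clearbody c d; move: (size s) => z; lia.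
have mf (a : {classic W}) : (a \in s') = (a != m) && (a \in s) by apply: mem_filter.
have [k [e [ie me]]] := IH s' hs'.
exists k.+1, (fun i => if i is i'.+1 then e i' else m); split.
  move=> [|i] [|j] //= ij jk; last exact: ie.
  have : e j \in s' by apply/me; exists j.
  rewrite mf => /andP[ne es].
  case: (om_tri m (e j)) => [//|me'|em]; first by rewrite me' eqxx in ne.
  by exfalso; apply: (mmin _ es).
move=> a; split.
  move=> as_; have [/eqP->|ne] := boolP (a == m); first by exists 0%N.
  have : a \in s' by rewrite mf ne.
  by move/me=> [i [ik ei]]; exists i.+1.
move=> [[|i] [ik ei]]; first by rewrite -ei.
have : a \in s' by apply/me; exists i.
by rewrite mf => /andP[].
Qed.

Lemma enum_fin (S : set W) : finite_set S ->
  exists k e, incr lt e k /\ (forall a, S a <-> exists i, (i < k)%N /\ e i = a).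
Proof.
move=> fS; have [w _] := uncount_ne om_unc.
have [s Ss] := (@finite_seqP {classic W} S).1 fS.
have [k [e [ie me]]] := enum_seq w (leqnn (size s)).
by exists k, e; split=> // a; rewrite Ss; apply: me.
Qed.
End Omega.

Import Order.TTheory GRing.Theory Num.Theory.

Lemma pow_le (a b : nat) : ((2%:R : rat) ^- a <= 2%:R ^- b)%R = (b <= a)%N.
Proof.
rewrite lef_pV2 ?inE ?exprn_gt0 //; have h : (1 < 2%:R :> rat)%R by []. exact: (ler_eXn2l h). all: by rewrite qualifE /= exprn_gt0.
Qed.

Lemma fs_before n (x y : n.-tuple bool) k :
  k < first_split x y -> take k x = take k y.
Proof.
rewrite /first_split => kf.
have kn : k < n.+1.
  apply: leq_trans kf _.
  by have := find_size (fun k => take k x != take k y) (iota 0 n.+1); rewrite size_iota.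
have := before_find 0 kf; rewrite nth_iota // add0n.
by move/negbT; rewrite negbK => /eqP.
Qed.

Lemma fs_at n (x y : n.-tuple bool) :
  x <> y -> take (first_split x y) x <> take (first_split x y) y.
Proof.
move=> xy; rewrite /first_split.
have hh : has (fun k => take k x != take k y) (iota 0 n.+1).
  apply/hasP; exists n; first by rewrite mem_iota add0n ltnSn.
  rewrite !take_oversize ?size_tuple //; apply/eqP => e; apply: xy; exact: val_inj.
have := nth_find 0 hh; set f := find _ _ => /eqP.
have fn : f < n.+1 by have := hh; rewrite has_find size_iota.
by rewrite nth_iota // add0n.
Qed.

Lemma take_le_eq (T : Type) (x y : seq T) i j : i <= j -> take j x = take j y -> take i x = take i y.
Proof. by move=> ij e; rewrite -(take_takel x ij) -(take_takel y ij) e. Qed.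

Lemma powP1 (a b : nat) : (b <= a)%N -> ((2%:R : rat) ^- a <= 2%:R ^- b)%R.
Proof. by rewrite pow_le. Qed.
Lemma powP2 (a b : nat) : ((2%:R : rat) ^- a <= 2%:R ^- b)%R -> (b <= a)%N.
Proof. by rewrite pow_le. Qed.

Lemma lip_iff n (g : n.-tuple bool -> n.-tuple bool) :
  lipschitz1 g <-> forall (x y : n.-tuple bool) k, take k x = take k y -> take k (g x) = take k (g y).
Proof.
split.
  move=> L x y k e.
  have [gxy|gxy] := eqVneq (g x) (g y); first by rewrite gxy.
  have xy : x <> y by move=> exy; rewrite exy eqxx in gxy.
  have := L x y; rewrite /cdist (negPf gxy).
  have [exy|_] := eqVneq x y; first by [].
  move/powP2 => le.
  have kf : k < first_split x y.
    rewrite ltnNge; apply/negP => fk; apply: (fs_at xy); exact: take_le_eq fk e.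
  apply: fs_before; exact: leq_trans kf le.
move=> P x y; rewrite /cdist.
have [->|xy] := eqVneq x y; first by rewrite eqxx.
have [gxy|gxy] := eqVneq (g x) (g y).
  by rewrite invr_ge0 exprn_ge0.
apply: powP1; rewrite leqNgt; apply/negP => lt.
apply: (fs_at (elimN eqP gxy)); apply: P; exact: fs_before.
Qed.

Local Open Scope classical_set_scope.

Section Amalg.
Variables (W : Type) (lt : W -> W -> Prop).
Hypothesis om : is_omega1 lt.

Definition codeF n (sl : seq nat) (G : seq (nat * seq bool * seq bool)) (p : cond W) :=
 [/\ cn p = n, cs p = [set` sl],
  (forall i, cs p i -> forall eta : (cn p).-tuple bool, (i, val eta, val (cf p i eta)) \in G) &
  (forall i x y, (i, x, y) \in G -> cs p i -> forall eta : (cn p).-tuple bool,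
       val eta = x -> val (cf p i eta) = y)].

Definition codeE k (gl : seq (seq bool)) (rl : seq (seq nat)) (p : cond W) e :=
 [/\ incr lt e k, (forall a, cv p a <-> exists i, (i < k)%N /\ e i = a),
  (forall i, (i < k)%N -> val (cgamma p (e i)) = nth [::] gl i) &
  (forall i j, (i < k)%N -> (j < k)%N -> lt (e i) (e j) ->
      crho p (e i) (e j) = nth 0%N (nth [::] rl i) j)].

Definition pos (e : nat -> W) k a := find (fun i => `[< e i = a >]) (iota 0 k).

Lemma pos_spec e k a : (exists i, (i < k)%N /\ e i = a) -> (pos e k a < k)%N /\ e (pos e k a) = a.
Proof.
move=> [i [ik ei]].
have hh : has (fun i => `[< e i = a >]) (iota 0 k).
  by apply/hasP; exists i; [rewrite mem_iota | apply/asboolP].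
have pk : (pos e k a < k)%N by have := hh; rewrite has_find size_iota.
split=> //; have := nth_find 0%N hh; rewrite -/(pos e k a) nth_iota // add0n.
by move/asboolP.
Qed.

Lemma amalg p q n sl G k gl rl e1 e2 m :
  in_P lt p -> in_P lt q -> codeF n sl G p -> codeF n sl G q ->
  codeE k gl rl p e1 -> codeE k gl rl q e2 -> (m <= k)%N ->
  (forall i, (i < m)%N -> e1 i = e2 i) ->
  (forall i j, (m <= i)%N -> (i < k)%N -> (m <= j)%N -> (j < k)%N -> e1 i <> e2 j) ->
  P_compatible lt p q.
Proof.
case: p => np sp vp fp gp rp; case: q => nq sq vq fq gq rq.
rewrite /in_P /codeF /codeE /=.
move=> [[fsp fvp lipp] [r1p r2p r3p r4p]] [[fsq fvq lipq] [r1q r2q r3q r4q]].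
move=> [enp esp Gp1 Gp2] [enq esq Gq1 Gq2] [ie1 me1 ge1 re1] [ie2 me2 ge2 re2] mk root1 disj.
subst np nq sp sq.
set S := [set` sl] in fsp lipp r1p r2p r1q lipq Gp1 Gp2 Gq1 Gq2 *.
have F1 i : S i -> forall eta, fp i eta = fq i eta.
  move=> Si eta; apply: val_inj; symmetry; apply: (Gq2 i (val eta)) => //; exact: Gp1.
have root a : vp a -> vq a -> exists i, [/\ (i < m)%N, e1 i = a & e2 i = a].
  move=> /me1 [i [ik ei]] /me2 [j [jk ej]].
  have [im|mi] := ltnP i m; first by exists i; rewrite -root1.
  have [jm|mj] := ltnP j m; first by exists j; rewrite root1.
  by exfalso; apply: (disj i j) => //; rewrite ei ej.
have rootlow a b : vp a -> vq a -> (vp b \/ vq b) -> ~ (vp b /\ vq b) -> lt a b.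
  move=> pa qa pqb nb; have [i [im ea e'a]] := root a pa qa.
  case: pqb => [/me1 [j [jk ej]]|/me2 [j [jk ej]]].
    have [jm|mj] := ltnP j m.
      by exfalso; apply: nb; split; [apply/me1; exists j|apply/me2; exists j; rewrite -root1].
    by rewrite -ea -ej; apply: ie1 => //; apply: leq_trans im mj.
  have [jm|mj] := ltnP j m.
    by exfalso; apply: nb; split; [apply/me1; exists j; rewrite root1|apply/me2; exists j].
  by rewrite -e'a -ej; apply: ie2 => //; apply: leq_trans im mj.
have groot a : vp a -> vq a -> gp a = gq a.
  move=> pa qa; have [i [im ea e'a]] := root a pa qa.
  have ik : (i < k)%N by apply: leq_trans im mk.
  have := ge1 i ik; have := ge2 i ik; rewrite ea e'a => h2 h1; apply: val_inj; exact: etrans h1 (esym h2).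
have rroot a b : vp a -> vq a -> vp b -> vq b -> lt a b -> rp a b = rq a b.
  move=> pa qa pb qb ab; have [i [im ea e'a]] := root a pa qa.
  have [j [jm eb e'b]] := root b pb qb.
  have ik : (i < k)%N by apply: leq_trans im mk.
  have jk : (j < k)%N by apply: leq_trans jm mk.
  have := re1 i j ik jk; have := re2 i j ik jk; rewrite ea eb e'a e'b => h2 h1.
  by rewrite h1 ?h2.
pose N := (\max_(i <- sl) i).+1.
have SN i : S i -> (i < N)%N.
  by move=> Si; rewrite ltnS; apply: (@leq_bigmax_seq _ sl xpredT (fun i => i) i Si isT).
pose t0 := nseq_tuple n.+1 false; pose tz := nseq_tuple n false.
pose ext (x : n.-tuple bool) (b : bool) : n.+1.-tuple bool := insubd t0 (val x ++ [:: b]).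
have val_ext x b : val (ext x b) = val x ++ [:: b].
  by rewrite val_insubd size_cat size_tuple addn1 eqxx.
pose tk (x : n.+1.-tuple bool) : n.-tuple bool := insubd tz (take n x).
have val_tk x : val (tk x) = take n x.
  by rewrite val_insubd size_take size_tuple ltnSn eqxx.
have tk_ext x b : tk (ext x b) = x.
  by apply: val_inj; rewrite /= val_tk val_ext take_size_cat // size_tuple.
have nth_ext x b : nth false (ext x b) n = b.
  by rewrite val_ext nth_cat size_tuple ltnn subnn.
have ext_inj x y b c : ext x b = ext y c -> x = y /\ b = c.
  by move=> exy; split; [rewrite -(tk_ext x b) -(tk_ext y c) exy| rewrite -(nth_ext x b) exy nth_ext].
pose Sq (y : n.-tuple bool) : bool := `[< exists a, [/\ vq a, ~ vp a & gq a = y] >].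
pose gr a := if `[< vp a >] then ext (gp a) false else ext (gq a) true.
pose p1 := pos e1 k; pose p2 := pos e2 k.
pose rr a b := if `[< vp a /\ vp b >] then rp a b else if `[< vq a /\ vq b >] then rq a b
   else if `[< vp a >] then (N + (p1 a).*2)%N else (N + (p2 a).*2.+1)%N.
pose fr i (x : n.+1.-tuple bool) := if (i < N)%N then
    ext (fp i (tk x)) (nth false x n && Sq (fp i (tk x)))
  else if odd (i - N) then gr (e2 (i - N)./2) else gr (e1 (i - N)./2).
pose sr := [set i | S i \/ (N <= i < N + k.*2)%N].
pose r := @Cond W n.+1 sr (vp `|` vq) fr gr rr.
have GR1 a : vp a -> gr a = ext (gp a) false by move=> pa; rewrite /gr asboolT.
have GR2 a : ~ vp a -> gr a = ext (gq a) true by move=> pa; rewrite /gr asboolF.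
have RR1 a b : vp a -> vp b -> rr a b = rp a b by move=> pa pb; rewrite /rr asboolT.
have RR2 a b : vq a -> vq b -> ~ (vp a /\ vp b) -> rr a b = rq a b.
  by move=> qa qb nab; rewrite /rr asboolF // asboolT.
have RR3 a b : vp a -> ~ vp b -> ~ vq a -> rr a b = (N + (p1 a).*2)%N.
  by move=> pa nb na; rewrite /rr asboolF; [rewrite asboolF; [rewrite asboolT|case]|case].
have RR4 a b : ~ vp a -> ~ vq b -> rr a b = (N + (p2 a).*2.+1)%N.
  by move=> na nb; rewrite /rr asboolF; [rewrite asboolF; [rewrite asboolF|case]|case].
have FR1 i x : (i < N)%N -> fr i x = ext (fp i (tk x)) (nth false x n && Sq (fp i (tk x))).
  by move=> iN; rewrite /fr iN.
have FR2 i x : (N <= i)%N -> fr i x = if odd (i - N) then gr (e2 (i - N)./2) else gr (e1 (i - N)./2).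
  by move=> iN; rewrite /fr ltnNge iN.
have P1 a : vp a -> (p1 a < k)%N /\ e1 (p1 a) = a by move/me1; apply: pos_spec.
have P2 a : vq a -> (p2 a < k)%N /\ e2 (p2 a) = a by move/me2; apply: pos_spec.
exists r; split; last split.
- rewrite /in_P /=; split; split.
  + apply: (sub_finite_set (B := `I_(N + k.*2))) => // i [/SN iN | /andP[_ ik]] /=.
      by apply: leq_trans iN (leq_addr _ _).
    by [].
  + by rewrite finite_setU.
  + move=> i [Si | /andP[Ni _]]; apply/lip_iff => x y j exy; last by rewrite !FR2.
    rewrite !FR1 ?SN //.
    have [jn|nj] := leqP j n.
      rewrite !val_ext !takel_cat ?size_tuple //.
      apply: ((lip_iff _).1 (lipp i Si)).
      by rewrite !val_tk !take_takel // exy.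
    have : x = y.
      have sx : (size x <= j)%N by rewrite size_tuple.
      have sy : (size y <= j)%N by rewrite size_tuple.
      by apply: val_inj; rewrite /= -(take_oversize sx) -(take_oversize sy).
    by move=> ->.
  + move=> a b ra rb ab.
    have [[pa pb]|npab] := pselect (vp a /\ vp b); first by rewrite RR1 //; left; apply: r1p.
    have [[qa qb]|nqab] := pselect (vq a /\ vq b); first by rewrite RR2 //; left; apply: r1q.
    right; have [pa|na] := pselect (vp a).
      have nb : ~ vp b by move=> pb; apply: npab.
      have nqa : ~ vq a by move=> qa; apply: nqab; split=> //; case: rb => // /nb.
      rewrite RR3 //; have [pk _] := P1 a pa; apply/andP; split; first exact: leq_addr.
      rewrite -!muln2; lia.
    have qa : vq a by case: ra => // /na.
    have nqb : ~ vq b by move=> qb; apply: nqab.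
    rewrite RR4 //; have [pk _] := P2 a qa; apply/andP; split; first exact: leq_addr.
    rewrite -!muln2; lia.
  + move=> a a' b ra ra' rb aa' a'b.
    have ab : lt a b := om_tr om aa' a'b.
    have [[pb qb]|nb] := pselect (vp b /\ vq b).
      have rt x : (vp x \/ vq x) -> lt x b -> vp x.
        move=> rx xb; apply: contrapT => nx.
        by have /(om_asym om xb) := rootlow b x pb qb rx (fun h => nx h.1).
      have pa := rt a ra ab; have pa' := rt a' ra' a'b.
      by rewrite !RR1 //; apply: r2p.
    have [pb|npb] := pselect (vp b).
      have nqb : ~ vq b by move=> qb; apply: nb.
      have cls x : (vp x \/ vq x) -> lt x b ->
          (vp x /\ rr x b = rp x b /\ (rp x b < N)%N) \/ (vq x /\ rr x b = (N + (p2 x).*2.+1)%N).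
        move=> rx xb; have [px|nx] := pselect (vp x); [left|right].
          by rewrite RR1 //; split=> //; split=> //; apply: SN; exact: r1p.
        have qx : vq x by case: rx => // /nx.
        by rewrite RR4.
      case: (cls a ra ab) => [[pa [-> ha]]|[qa ->]];
        case: (cls a' ra' a'b) => [[pa' [-> ha']]|[qa' ->]].
      * exact: r2p.
      * by move=> e; lia.
      * by move=> e; lia.
      * move=> e; have e' : p2 a = p2 a' by move: e; rewrite -!muln2; lia.
        have ha := (P2 a qa).2; have ha' := (P2 a' qa').2.
        rewrite e' ha' in ha; rewrite ha in aa'; exact: om_irr om _ aa'.
    have qb : vq b by case: rb => // /npb.
    have cls x : (vp x \/ vq x) -> lt x b ->
        (vq x /\ rr x b = rq x b /\ (rq x b < N)%N) \/ (vp x /\ rr x b = (N + (p1 x).*2)%N).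
      move=> rx xb; have [qx|nx] := pselect (vq x); [left|right].
        rewrite RR2 //; last by case.
        by split=> //; split=> //; apply: SN; exact: r1q.
      have px : vp x by case: rx => // /nx.
      by rewrite RR3.
    case: (cls a ra ab) => [[qa [-> ha]]|[pa ->]];
      case: (cls a' ra' a'b) => [[qa' [-> ha']]|[pa' ->]].
    * exact: r2q.
    * by move=> e; lia.
    * by move=> e; lia.
    * move=> e; have e' : p1 a = p1 a' by move: e; rewrite -!muln2; lia.
      have ha := (P1 a pa).2; have ha' := (P1 a' pa').2.
      rewrite e' ha' in ha; rewrite ha in aa'; exact: om_irr om _ aa'.
  + move=> a b ra rb.
    have [pa|na] := pselect (vp a); have [pb|nb] := pselect (vp b).
    * by rewrite !GR1 // => /ext_inj [h _]; apply: r3p.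
    * by rewrite GR1 // GR2 // => /ext_inj [_].
    * by rewrite GR2 // GR1 // => /ext_inj [_].
    * have qa : vq a by case: ra => // /na.
      have qb : vq b by case: rb => // /nb.
      by rewrite !GR2 // => /ext_inj [h _]; apply: r3q.
  + move=> a b ra rb ab.
    have [[pa pb]|npab] := pselect (vp a /\ vp b).
      rewrite RR1 // FR1; last by apply: SN; apply: r1p.
      by rewrite !GR1 // tk_ext nth_ext /= -r4p.
    have [[qa qb]|nqab] := pselect (vq a /\ vq b).
      have nb : ~ vp b.
        move=> pb; apply: npab; split=> //; apply: contrapT => na.
        apply: (om_asym om ab); apply: (rootlow b a pb qb (or_intror qa)) => -[pa _]; exact: na pa.
      rewrite (RR2 a b qa qb npab) FR1; last by apply: SN; apply: r1q.
      rewrite (GR2 b) // tk_ext nth_ext /= F1; last exact: r1q.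
      rewrite -r4q //.
      have [pa|na] := pselect (vp a).
        rewrite GR1 // groot // /Sq asboolF // => -[a' [qa' na' ga']].
        by apply: na'; rewrite (r3q a' a qa' qa ga').
      by rewrite GR2 // /Sq asboolT //; exists a.
    have [pa|na] := pselect (vp a).
      have nb : ~ vp b by move=> pb; apply: npab.
      have nqa : ~ vq a by move=> qa; apply: nqab; split=> //; case: rb => // /nb.
      rewrite RR3 // FR2 ?leq_addr // addKn odd_double doubleK.
      by rewrite (P1 a pa).2.
    have qa : vq a by case: ra => // /na.
    have nqb : ~ vq b by move=> qb; apply: nqab.
    rewrite RR4 // FR2 ?leq_addr // addKn /= odd_double /=.
    rewrite uphalf_double.
    by rewrite (P2 a qa).2.
- rewrite /P_le /=; split; first by split=> //; move=> a ?; by [left|right].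
  split.
  + move=> i Si eta eta' e'; rewrite FR1; last exact: SN.
    rewrite val_ext take_size_cat ?size_tuple //; congr (val (fp i _)).
    by apply: val_inj; rewrite /= val_tk e'.
  + by move=> a pa; rewrite GR1 // val_ext take_size_cat ?size_tuple.
  + by move=> a b pa pb _; rewrite RR1.
- rewrite /P_le /=; split; first by split=> //; move=> a ?; by [left|right].
  split.
  + move=> i Si eta eta' e'; rewrite FR1; last exact: SN.
    rewrite val_ext take_size_cat ?size_tuple // F1 //; congr (val (fq i _)).
    by apply: val_inj; rewrite /= val_tk e'.
  + move=> a qa; have [pa|na] := pselect (vp a).
      by rewrite GR1 // val_ext take_size_cat ?size_tuple // groot.
    by rewrite GR2 // val_ext take_size_cat ?size_tuple.
  + move=> a b qa qb ab; have [[pa pb]|nab] := pselect (vp a /\ vp b).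
      by rewrite RR1 // rroot.
    by rewrite RR2.
Qed.
End Amalg.

Local Open Scope classical_set_scope.

Definition codeT := (nat * seq nat * seq (nat * seq bool * seq bool) * nat * seq (seq bool) * seq (seq nat))%type.

Definition Rc (W : Type) (lt : W -> W -> Prop) (c : codeT) (p : cond W) : Prop :=
  let: (n, sl, G, k, gl, rl) := c in codeF n sl G p /\ exists e, codeE lt k gl rl p e.

Lemma code_exists (W : Type) (lt : W -> W -> Prop) (p : cond W) :
  is_omega1 lt -> in_P lt p -> exists c, Rc lt c p.
Proof.
move=> om [[fs fv lip] _].
have [sl esl] := (finite_seqP (cs p)).1 fs.
have [k [e [ie me]]] := enum_fin om fv.
pose G := [seq (i, val eta, val (cf p i eta)) | i <- sl, eta <- enum (predT : {pred (cn p).-tuple bool})].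
exists (cn p, sl, G, k, mkseq (fun i => val (cgamma p (e i))) k,
        mkseq (fun i => mkseq (fun j => crho p (e i) (e j)) k) k).
split.
  split=> //.
    move=> i Si eta; apply/allpairsP; exists (i, eta); split=> //=.
      by move: Si; rewrite esl.
    by rewrite mem_enum.
  move=> i x y /allpairsP [[i' eta'] [_ _ /= [-> -> ->]]] Si eta e'.
  by congr (val (cf p i' _)); apply: val_inj.
exists e; split=> //.
  by move=> i ik; rewrite nth_mkseq.
by move=> i j ik jk _; rewrite !nth_mkseq.
Qed.

Theorem lemma3p2 (W : Type) (lt : W -> W -> Prop) :
  is_omega1 lt -> P_ccc lt.
Proof.
move=> om A [inA anti]; apply: contrapT => nA.
have [c [_ nAc]] := pigeon (D := [set: codeT]) (R := Rc lt) (countableP _) nA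
  (fun p Ap => let: ex_intro c h := code_exists om (inA p Ap) in ex_intro _ c (conj I h)).
case: c nAc => [[[[[n sl] G] k] gl] rl] nAc.
have [w _] := uncount_ne (om_unc om).
have [ef hef] : {ef : cond W -> nat -> W & forall p,
  A p /\ Rc lt (n, sl, G, k, gl, rl) p -> codeE lt k gl rl p (ef p)}.
  apply: (@choice _ _ (fun p (e : nat -> W) =>
    A p /\ Rc lt (n, sl, G, k, gl, rl) p -> codeE lt k gl rl p e)).
  move=> p; have [[Ap [_ [e he]]]|nAp] := pselect (A p /\ Rc lt (n, sl, G, k, gl, rl) p).
    by exists e.
  by exists (fun _ => w).
have [p [q [[Ap Rp] [Aq Rq] pq [m [mk E1 E2]]]]] :=
  delta om nAc (fun p Ap => let: And4 h _ _ _ := hef p Ap in h).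
apply: (anti p q Ap Aq pq).
exact: (amalg om (inA p Ap) (inA q Aq) Rp.1 Rq.1 (hef p (conj Ap Rp)) (hef q (conj Aq Rq)) mk E1 E2).
Qed.
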